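(* Let $M=(E,\mathcal{I})$ be a matroid, $\Delta$ a nonnegative integer, $w:E\to\{-\Delta,\dots,\Delta\}$ integer weights and $\mu\ge0$. Let $A,B\in\mathcal{I}$ be disjoint with $|A|=|B|=k$ and $|w(A)-w(B)|\le\mu$. Then there exist subsets $A'\subseteq A$ and $B'\subseteq B$ of equal cardinality such that (i) $(A\setminus A')\cup B'\in\mathcal{I}$, (ii) $|A'|=|B'|\ge (k-\mu)/(2\Delta+1)^2$, and (iii) $w(a)\ge w(b)$ for each $a\in A'$ and $b\in B'$.
   Context: $w(S)=\sum_{e\in S}w(e)$ for $S\subseteq E$. *)

(* Defs.v *)
From mathcomp Require Import all_boot all_order all_algebra.
Set Implicit Arguments. Unset Strict Implicit. Unset Printing Implicit Defensive.
Import Order.TTheory GRing.Theory Num.Theory.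

Definition is_matroid (E : finType) (I : pred {set E}) : Prop :=
  [/\ I set0,
      (forall X Y : {set E}, Y \subset X -> I X -> I Y) &
      (forall X Y : {set E}, I X -> I Y -> #|X| < #|Y| ->
          exists2 y, y \in Y :\: X & I (y |: X))].

Definition wsum (E : finType) (w : E -> int) (S : {set E}) : int :=
  (\sum_(e in S) w e)%R.

(* Main.v *)
Require Import Defs.
From mathcomp Require Import all_boot all_order all_algebra zify ring lra.
Import Order.TTheory GRing.Theory Num.Theory.


Lemma card_disjU (E : finType) (X Z : {set E}) :
  [disjoint X & Z] -> #|X :|: Z| = #|X| + #|Z|.
Proof. by move=> d; rewrite cardsU (disjoint_setI0 d) cards0 subn0. Qed.

Lemma aug (E : finType) (I : pred {set E}) : is_matroid I ->
  forall X Y, I X -> I Y -> forall n, #|X| + n <= #|Y| ->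
  exists Z : {set E}, [/\ Z \subset Y :\: X, #|Z| = n & I (X :|: Z)].
Proof.
case=> _ _ M X Y IX IY; elim=> [|n IH] H.
  by exists set0; rewrite sub0set cards0 setU0.
have [Z [sZ cZ IZ]] := IH ltac:(lia).
have dXZ : [disjoint X & Z].
  rewrite disjoint_sym; apply/pred0P=> x /=; apply/negbTE/negP=> /andP[xZ xX].
  by have := subsetP sZ x xZ; rewrite inE xX.
have cXZ : #|X :|: Z| < #|Y| by rewrite card_disjU // cZ; lia.
have [y yY Iy] := M _ _ IZ IY cXZ.
move: yY; rewrite !inE negb_or => /andP[/andP[yX yZ] yY].
exists (y |: Z); split.
- apply/subsetP=> x; rewrite !inE => /orP[/eqP->|xZ]; first by rewrite yX yY.
  by have := subsetP sZ x xZ; rewrite inE.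
- by rewrite cardsU1 yZ cZ add1n.
- by rewrite setUCA.
Qed.

Lemma step (E : finType) (I : pred {set E}) (A B : {set E}) k (j : E -> nat) i :
  is_matroid I -> I A -> I B -> [disjoint A & B] -> #|A| = k -> #|B| = k ->
  exists A' B' : {set E},
    [/\ A' \subset A /\ B' \subset B, #|A'| = #|B'|,
        I ((A :\: A') :|: B'),
        #|[set a in A | i <= j a]| + #|[set b in B | j b <= i]| <= #|A'| + k &
        forall a b, a \in A' -> b \in B' -> j b <= j a].
Proof.
move=> M IA IB dAB cA cB.
have M' := M; case: M' => _ Msub _.
set Ah := [set a in A | i <= j a]; set Bl := [set b in B | j b <= i].
have sAh : Ah \subset A by apply/subsetP=> x; rewrite inE => /andP[].
have sBl : Bl \subset B by apply/subsetP=> x; rewrite inE => /andP[].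
have cAh : #|Ah| <= k by rewrite -cA subset_leq_card.
have cBl : #|Bl| <= k by rewrite -cB subset_leq_card.
have [hk|hk] := leqP k (#|Ah| + #|Bl|); last first.
  exists set0, set0; split.
  - by rewrite !sub0set.
  - by rewrite !cards0.
  - by rewrite setD0 setU0.
  - by rewrite cards0 add0n ltnW.
  - by move=> a b; rewrite inE.
set X0 := A :\: Ah.
have cX0 : #|X0| = k - #|Ah| by rewrite cardsDS // cA.
have IX0 : I X0 by apply: Msub IA; apply: subsetDl.
have IBl : I Bl by apply: Msub IB.
have h0 : #|X0| + (#|Bl| - #|X0|) <= #|Bl|.
  rewrite cX0; clear -hk cAh cBl; lia.
have [Z [sZ cZ IZ]] := @aug _ _ M _ _ IX0 IBl (#|Bl| - #|X0|) h0.
have dXZ : [disjoint X0 & Z].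
  rewrite disjoint_sym; apply/pred0P=> x /=; apply/negbTE/negP=> /andP[xZ xX].
  by have := subsetP sZ x xZ; rewrite inE xX.
have cXZ : #|X0 :|: Z| = #|Bl| by rewrite card_disjU // cZ cX0; clear -hk cAh cBl; lia.
have h1 : #|X0 :|: Z| + (k - #|Bl|) <= #|A| by rewrite cXZ cA; clear -cBl; lia.
have [W [sW cW IW]] := @aug _ _ M _ _ IZ IA (k - #|Bl|) h1.
have WAh : W \subset Ah.
  apply/subsetP=> x xW; have := subsetP sW x xW.
  rewrite !inE; case: (x \in A); case: (i <= j x); by rewrite //= ?orbT ?andbF.
exists (Ah :\: W), Z; split.
- split; first by apply: subset_trans (subsetDl _ _) sAh.
  apply: subset_trans sZ _; apply: subset_trans (subsetDl _ _) sBl.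
- rewrite cardsDS // cW cZ cX0; clear -hk cAh cBl; lia.
- suff -> : (A :\: (Ah :\: W)) :|: Z = X0 :|: Z :|: W by [].
  apply/setP=> x; rewrite !inE.
  case xW: (x \in W).
    have := subsetP sW x xW; rewrite !inE => /andP[_ ->]; by rewrite !orbT.
  case xZ: (x \in Z).
    by rewrite !orbT.
  by rewrite !orbF.
- rewrite cardsDS // cW; clear -hk cAh cBl; lia.
- move=> a b; rewrite !inE => /andP[_ /andP[_ ha]] bZ.
  have := subsetP sZ b bZ; rewrite !inE => /andP[_ /andP[_ hb]].
  exact: leq_trans hb ha.
Qed.

Lemma cnt1 N j0 : \sum_(i < N) (i <= j0 : nat) = minn N j0.+1.
Proof.
elim: N => [|N IH]; first by rewrite big_ord0.
rewrite big_ord_recr /= IH; case: leqP => h; lia.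
Qed.

Lemma cnt2 N j0 : \sum_(i < N) (j0 <= i : nat) = N - j0.
Proof.
elim: N => [|N IH]; first by rewrite big_ord0.
rewrite big_ord_recr /= IH; case: leqP => h; lia.
Qed.

Lemma cardsum (E : finType) (A : {set E}) (P : pred E) :
  #|[set a in A | P a]| = \sum_(a in A) (P a : nat).
Proof.
rewrite -sum1_card.
rewrite [RHS]big_mkcond [LHS]big_mkcond /=; apply: eq_bigr => x _.
by rewrite !inE; case: (x \in A); case: (P x).
Qed.

Lemma counting (E : finType) (A B : {set E}) k N (j : E -> nat) :
  #|A| = k -> #|B| = k -> (forall e, j e < N) ->
  \sum_(i < N) (#|[set a in A | i <= j a]| + #|[set b in B | j b <= i]|)
   + \sum_(b in B) j b = \sum_(a in A) j a + k + N * k.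
Proof.
move=> cA cB hj.
rewrite big_split /=.
have -> : \sum_(i < N) #|[set a in A | i <= j a]| = \sum_(a in A) j a + k.
  rewrite (eq_bigr (fun i : 'I_N => \sum_(a in A) (i <= j a : nat))); last first.
    by move=> i _; rewrite (@cardsum _ A (fun a => i <= j a)).
  rewrite exchange_big /=.
  under eq_bigr => a _ do rewrite cnt1 (minn_idPr (hj a)) -addn1.
  by rewrite big_split /= sum1_card cA.
have -> : \sum_(i < N) #|[set b in B | j b <= i]| = \sum_(b in B) (N - j b).
  rewrite (eq_bigr (fun i : 'I_N => \sum_(b in B) (j b <= i : nat))); last first.
    by move=> i _; rewrite (@cardsum _ B (fun b => j b <= i)).
  rewrite exchange_big /=.
  by under eq_bigr => a _ do rewrite cnt2.
rewrite -addnA -big_split /=.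
have -> : \sum_(b in B) (N - j b + j b) = \sum_(b in B) N by apply: eq_bigr => b _; rewrite subnK // ltnW.
by rewrite sum_nat_const cB mulnC.
Qed.
Local Open Scope ring_scope.

Theorem lemma8 (R : realFieldType) (E : finType) (I : pred {set E})
  (Delta : nat) (w : E -> int) (mu : R) (A B : {set E}) (k : nat) :
  is_matroid I ->
  (forall e, `|w e| <= (Delta%:Z)) ->
  0 <= mu ->
  I A -> I B -> [disjoint A & B] ->
  #|A| = k -> #|B| = k ->
  `|(wsum w A - wsum w B)%:~R| <= mu ->
  exists A' B' : {set E},
    [/\ A' \subset A /\ B' \subset B, #|A'| = #|B'|,
        I ((A :\: A') :|: B'),
        (k%:R - mu) / ((2 * Delta + 1) ^ 2)%N%:R <= (#|A'|%:R : R) &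
        forall a b, a \in A' -> b \in B' -> w b <= w a].
Proof.
move=> M hw hmu IA IB dAB cA cB hAB.
pose N := (2 * Delta).+1.
pose j e := absz (w e + Delta%:Z).
have hjz : forall e, (j e)%:Z = w e + Delta%:Z.
  move=> e; rewrite /j gez0_abs //; have := hw e; rewrite ler_norml; lia.
have hjN : forall e, (j e < N)%N.
  move=> e; have := hjz e; have := hw e; rewrite ler_norml /N; lia.
pose g (i : 'I_N) := (#|[set a in A | i <= j a]| + #|[set b in B | j b <= i]|)%N.
pose i0 := [arg max_(i > (ord0 : 'I_N)) g i].
have gmax : (\sum_(i < N) g i <= N * g i0)%N.
  rewrite /i0; case: arg_maxnP => // m _ hm.
  apply: (@leq_trans (\sum_(i < N) g m)); first by apply: leq_sum => i _; exact: hm.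
  by rewrite sum_nat_const card_ord.
have hcnt := @counting _ _ _ _ _ _ cA cB hjN.
have [A' [B' [[sA sB] cAB IAB hg hj]]] := @step _ _ _ _ _ j i0 M IA IB dAB cA cB.
have key : (\sum_(a in A) j a + k <= N * #|A'| + \sum_(b in B) j b)%N.
  move: hcnt gmax hg; rewrite -/(g i0).
  set S := (\sum_(i < N) _)%N; set SA := (\sum_(a in A) _)%N; set SB := (\sum_(b in B) _)%N.
  move=> h1 h2 h3; have h4 : (N * g i0 <= N * (#|A'| + k))%N by rewrite leq_mul2l h3 orbT.
  clear -h1 h2 h4; nia.
exists A', B'; split => //.
- have keyR : ((\sum_(a in A) j a + k)%N%:R <= (N * #|A'| + \sum_(b in B) j b)%N%:R :> R) by rewrite ler_nat.
  rewrite (natrD _ (\sum_(a in A) j a)) (natrD _ (N * #|A'|)) (natrM _ N) !natr_sum in keyR.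
  have hjR : forall e, (j e)%:R = (w e)%:~R + Delta%:R :> R.
    move=> e; have := congr1 (fun z : int => z%:~R : R) (hjz e); rewrite /= intrD => <-.
    by [].
  have sR : forall S : {set E}, \sum_(a in S) (j a)%:R = (wsum w S)%:~R + Delta%:R *+ #|S| :> R.
    move=> S; rewrite /wsum rmorph_sum -sumr_const -big_split /=.
    by apply: eq_bigr => e _; rewrite hjR.
  rewrite !sR cA cB in keyR.
  move: hAB; rewrite intrB ler_norml => /andP[hAB1 _].
  have -> : ((2 * Delta + 1) ^ 2)%N%:R = (N%:R : R) ^+ 2 by rewrite natrX addn1.
  have Npos : (1 : R) <= N%:R by rewrite ler1n.
  rewrite ler_pdivrMr; last by rewrite exprn_gt0 // (lt_le_trans ltr01 Npos).
  have x0 : (0 : R) <= #|A'|%:R by [].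
  move: keyR hAB1 Npos x0.
  set x := (#|A'|%:R : R); set n := (N%:R : R); set a := ((wsum w A)%:~R : R);
  set b := ((wsum w B)%:~R : R); set kk := (k%:R : R); set d := (Delta%:R *+ k : R).
  move=> h1 h2 h3 h4.
  have hc : kk - mu <= n * x by lra.
  have hx2 : 0 <= x * n ^+ 2 by rewrite mulr_ge0 // exprn_ge0 // (le_trans ler01 h3).
  case: (lerP 0 (kk - mu)) => hc0; last by lra.
  have : (kk - mu) * 1 <= (n * x) * n by apply: ler_pM.
  rewrite mulr1 expr2; lra.
- move=> a b aA bB; have := hj a b aA bB; have := hjz a; have := hjz b; lia.
Qed.
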